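(* Let $n>1$ be an odd integer, $k\ge1$, and $p$ the smallest prime divisor of $n$. Then $\mathrm{C}^{n,k}_{\mathrm{RDH}}$ is $\frac{1}{p-1}$-secure against substitution attacks: for every function $\mathcal{F}:\mathbb{Z}_n^k\times\mathbb{Z}_n\to\mathbb{Z}_n^k\times\mathbb{Z}_n$, $$\Pr_{\mathbf{m},\mathbf{x}\leftarrow\mathbb{Z}_n^k,\ \mathbf{y}\leftarrow(\mathbb{Z}_n^* )^k}\big[\mathcal{F}(c)\ne c\ \wedge\ \mathcal{D}_{\mathbf{x}\|\mathbf{y}}(\mathcal{F}(c))\ne\bot\big]\le\frac{1}{p-1},\quad\text{where } c=\mathcal{E}_{\mathbf{x}\|\mathbf{y}}(\mathbf{m}).$$
   Context: For $\mathbf{y}\in(\mathbb{Z}_n^* )^k$ and $\mathbf{m}\in\mathbb{Z}_n^k$ let $\Upsilon_{\mathbf{y}}(\mathbf{m})=\sum_{i=1}^k m_iy_i\bmod n$. The code $\mathrm{C}^{n,k}_{\mathrm{RDH}}$ has source states $\mathbb{Z}_n^k$, keys $\mathbf{x}\|\mathbf{y}\in\mathbb{Z}_n^k\times(\mathbb{Z}_n^* )^k$, ciphertexts $\mathbf{c}\|t\in\mathbb{Z}_n^k\times\mathbb{Z}_n$, encryption $\mathcal{E}_{\mathbf{x}\|\mathbf{y}}(\mathbf{m})=(\mathbf{m}+\mathbf{x}\bmod n)\,\|\,\Upsilon_{\mathbf{y}}(\mathbf{m})$, and decryption $\mathcal{D}_{\mathbf{x}\|\mathbf{y}}(\mathbf{c}\|t)=\mathbf{c}-\mathbf{x}\bmod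 n$ if $\Upsilon_{\mathbf{y}}(\mathbf{c}-\mathbf{x})=t$ and $\bot$ otherwise. All random choices are uniform and independent; the forger $\mathcal{F}$ is an arbitrary (computationally unrestricted) function. *)

(* Defs.v *)
From HB Require Import structures.
From mathcomp Require Import all_boot all_order all_fingroup all_algebra.
Set Implicit Arguments. Unset Strict Implicit. Unset Printing Implicit Defensive.
Import GRing.Theory Num.Theory.
Local Open Scope ring_scope.

Definition vec (n k : nat) := {ffun 'I_k -> 'Z_n}.
Definition uvec (n k : nat) := {ffun 'I_k -> {unit 'Z_n}}.
Definition ctext (n k : nat) := (vec n k * 'Z_n)%type.

Definition Upsilon n k (y : uvec n k) (m : vec n k) : 'Z_n :=
  \sum_(i < k) m i * val (y i).

Definition Enc n k (x : vec n k) (y : uvec n k) (m : vec n k) : ctext n k :=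
  ([ffun i => m i + x i], Upsilon y m).

(* None plays the role of bottom *)
Definition Dec n k (x : vec n k) (y : uvec n k) (ct : ctext n k) : option (vec n k) :=
  let d := [ffun i => ct.1 i - x i] in
  if Upsilon y d == ct.2 then Some d else None.

(* Success probability of the substitution forger F, with m, x uniform in
   Z_n^k and y uniform in units^k, all independent. *)
Definition subst_success n k (F : ctext n k -> ctext n k) : rat :=
  (#|[set w : vec n k * vec n k * uvec n k |
        let: (m, x, y) := w in
        let c := Enc x y m in (F c != c) && (Dec x y (F c) != None)]|%:R)
  / (#|{: vec n k * vec n k * uvec n k}|%:R).

(* Main.v *)
Require Import Defs.
From HB Require Import structures.
From mathcomp Require Import all_boot all_order all_fingroup all_algebra.
From mathcomp Require Import zify.
Import GRing.Theory Num.Theory.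
Local Open Scope ring_scope.

Lemma small_unit n a : (1 < n)%N -> (0 < a < pdiv n)%N -> (a%:R : 'Z_n) \is a GRing.unit.
Proof.
move=> Hn /andP[a0 ap]; rewrite unitZpE //.
rewrite /coprime; apply/negPn/negP => Hg.
have g0 : (0 < gcdn n a)%N by rewrite gcdn_gt0 a0 orbT.
have g1 : (1 < gcdn n a)%N by rewrite ltn_neqAle eq_sym Hg.
have := pdiv_min_dvd g1 (dvdn_gcdl n a).
have := dvdn_leq a0 (dvdn_gcdr n a).
move=> h1 h2; have := leq_trans h2 h1; by rewrite leqNgt ap.
Qed.

Section Main.
Variables (n k : nat) (Hn : (1 < n)%N) (F : ctext n k -> ctext n k).
Local Notation W := (vec n k * vec n k * uvec n k)%type.
Local Notation P := (pdiv n).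

Definition jr (j : 'I_P.-1) : 'Z_n := (j.+1)%:R.

Lemma jr_lt (j : 'I_P.-1) : (0 < j.+1 < P)%N.
Proof. have := ltn_ord j; have := pdiv_gt0 n; lia. Qed.

Lemma jr_unit j : jr j \is a GRing.unit.
Proof. exact: small_unit (jr_lt j). Qed.

Lemma jr_diff_unit j1 j2 : j1 != j2 -> jr j1 - jr j2 \is a GRing.unit.
Proof.
have h1 := jr_lt j1; have h2 := jr_lt j2.
move=> ne; case: (ltngtP j1 j2) => [lt|lt|/val_inj eq]; last by rewrite eq eqxx in ne.
- rewrite -opprB /jr -natrB; last by lia.
  rewrite unitrN; apply: small_unit => //; lia.
- rewrite /jr -natrB; last by lia.
  apply: small_unit => //; lia.
Qed.

Definition Encw (w : W) : ctext n k := Enc w.1.2 w.2 w.1.1.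

Definition idx (c : ctext n k) : option 'I_k := [pick l | (F c).1 l - c.1 l != 0].

Definition g (wj : W * 'I_P.-1) : W :=
  let: ((m, x, y), j) := wj in
  match idx (Enc x y m) with
  | Some i =>
     let m' := [ffun l => if l == i then m l / jr j else m l] in
     let y' := [ffun l => if l == i then insubd (y l) (jr j * val (y l)) else y l] in
     (m', [ffun l => (Enc x y m).1 l - m' l], y')
  | None => (m, x, y)
  end.

Lemma val_y' (y : uvec n k) j l : val (insubd (y l) (jr j * val (y l))) = jr j * val (y l).
Proof. by rewrite insubdK // unfold_in unitrM jr_unit (valP (y l)). Qed.

Lemma encg w j : Encw (g (w, j)) = Encw w.
Proof.
case: w => [[m x] y] /=; rewrite /g; case: (idx _) => [i|] //.
rewrite /Encw /Enc /=; congr pair.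
  by apply/ffunP => l; rewrite !ffunE addrC subrK.
rewrite /Upsilon; apply: eq_bigr => l _; rewrite !ffunE.
case: ifP => _ //; rewrite val_y' mulrA divrK //; exact: jr_unit.
Qed.

Lemma dec_eq m x y : Dec x y (F (Enc x y m)) != None ->
  Upsilon y [ffun l => (F (Enc x y m)).1 l - x l] = (F (Enc x y m)).2.
Proof. by rewrite /Dec /=; case: (Upsilon _ _ =P _). Qed.

Lemma succ_sum m x y : Dec x y (F (Enc x y m)) != None ->
  \sum_l ((F (Enc x y m)).1 l - (Enc x y m).1 l) * val (y l)
   = (F (Enc x y m)).2 - (Enc x y m).2.
Proof.
move/dec_eq; rewrite /Upsilon => <-; apply/eqP; rewrite eq_sym subr_eq -big_split /=.
apply/eqP/eq_bigr => l _; rewrite !ffunE -mulrDl; congr (_ * _).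
by rewrite opprD addrA addrAC subrK.
Qed.

Lemma succ_idx m x y : F (Enc x y m) != Enc x y m -> Dec x y (F (Enc x y m)) != None ->
  exists i, idx (Enc x y m) = Some i /\ (F (Enc x y m)).1 i - (Enc x y m).1 i != 0.
Proof.
move=> ne /dec_eq D; rewrite /idx; case: pickP => [i Hi|H]; first by exists i.
exfalso; move/eqP: ne; apply.
have E1 : (F (Enc x y m)).1 = (Enc x y m).1.
  by apply/ffunP => l; apply/eqP; rewrite -subr_eq0; apply/negbFE; rewrite H.
case E: (F (Enc x y m)) D E1 => [c t] /= D E1; rewrite E1 in D *.
congr pair; rewrite -D /Enc /=; congr Upsilon; apply/ffunP => l; rewrite !ffunE.
by rewrite addrK.
Qed.

Definition Aset := [set w : W | let: (m, x, y) := w in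
        let c := Enc x y m in (F c != c) && (Dec x y (F c) != None)].

Lemma g_inj : {in setX Aset [set: 'I_P.-1] &, injective g}.
Proof.
move=> [w1 j1] [w2 j2] /setXP[A1 _] /setXP[A2 _] E.
have Ec := congr1 Encw E; rewrite !encg in Ec.
move: A1 A2 E Ec; case: w1 => [[m1 x1] y1]; case: w2 => [[m2 x2] y2].
rewrite !inE /Encw /= => /andP[ne1 dc1] /andP[ne2 dc2] E Ec.
have [i [Hi di]] := succ_idx _ _ _ ne1 dc1.
have [i2 [Hi2 _]] := succ_idx _ _ _ ne2 dc2.
have ei : i2 = i by move: Hi2; rewrite -Ec Hi => -[].
subst i2.
have S1 := succ_sum _ _ _ dc1; have S2 := succ_sum _ _ _ dc2.
rewrite -Ec in S2.
move: E; rewrite -Ec Hi /= => -[Em Ex Ey].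
set d := fun l => (F (Enc x1 y1 m1)).1 l - (Enc x1 y1 m1).1 l.
have Yo l : l != i -> y1 l = y2 l.
  by move=> /negbTE nl; move/ffunP: Ey => /(_ l); rewrite !ffunE nl.
have Yi : jr j1 * val (y1 i) = jr j2 * val (y2 i).
  by move/ffunP: Ey => /(_ i); rewrite !ffunE eqxx => /(congr1 val); rewrite !val_y'.
have Dd : d i * val (y1 i) = d i * val (y2 i).
  move: S1; rewrite -S2 (bigD1 i) //= [in RHS](bigD1 i) //= => /eqP.
  rewrite -/d. 
  have -> : \sum_(l < k | l != i) d l * val (y1 l) = \sum_(l < k | l != i) d l * val (y2 l).
    by apply: eq_bigr => l nl; rewrite Yo.
  by rewrite (addrC _ (\sum_(l < k | l != i) _)) (addrC (_ * val (y2 i))) (inj_eq (addrI _)) => /eqP.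
have ej : j1 = j2.
  apply/eqP; apply/negP => /negP ne.
  have : (jr j1 - jr j2) * (d i * val (y1 i)) = 0.
    rewrite mulrBl {2}Dd mulrCA Yi mulrCA subrr //.
  move=> H.
  have h0 : d i * val (y1 i) = 0.
    by rewrite -(mulKr (jr_diff_unit _ _ ne) (d i * _)) H mulr0.
  have yu : val (y1 i) \is a GRing.unit by have := valP (y1 i); rewrite unfold_in.
  have : d i = 0 by rewrite -(mulrK yu (d i)) h0 mul0r.
  by move/eqP; rewrite (negbTE di).
subst j2.
have ey : y1 = y2.
  apply/ffunP => l; case: (eqVneq l i) => [->|nl]; last exact: Yo.
  by apply: val_inj; apply: (mulrI (jr_unit j1)).
subst y2.
have em : m1 = m2.
  apply/ffunP => l; move/ffunP: Em => /(_ l); rewrite !ffunE.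
  have jv : (jr j1)^-1 \is a GRing.unit by rewrite unitrV jr_unit.
  by case: eqP => // _ /(mulIr jv).
subst m2.
have ex : x1 = x2.
  apply/ffunP => l; have := congr1 (fun c : ctext n k => c.1 l) Ec; rewrite /= !ffunE.
  exact: addrI.
by subst x2.
Qed.
End Main.

Lemma card_bound n k (Hn : (1 < n)%N) (F : ctext n k -> ctext n k) :
  (#|Aset n k F| * (pdiv n).-1 <= #|{: vec n k * vec n k * uvec n k}|)%N.
Proof.
have -> : (#|Aset n k F| * (pdiv n).-1 = #|setX (Aset n k F) [set: 'I_(pdiv n).-1]|)%N.
  by rewrite cardsX cardsT card_ord.
rewrite -(card_in_imset (@g_inj n k Hn F)); exact: max_card.
Qed.

Lemma ratlem (a t p : nat) : (1 < p)%N -> (a * p.-1 <= t)%N ->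
  (a%:R / t%:R : rat) <= 1 / (p%:R - 1).
Proof.
move=> p1 H.
have ep : (p%:R - 1 : rat) = (p.-1)%:R by rewrite -{1}(prednK (ltnW p1)) -natr1 addrK.
have q0 : (0 < (p.-1)%:R :> rat) by rewrite ltr0n -ltnS prednK // ltnW.
rewrite ep mul1r.
case: (posnP t) => [->|t0]; first by rewrite invr0 mulr0 invr_ge0 ler0n.
rewrite ler_pdivrMr ?ltr0n // mulrC ler_pdivlMr // -natrM ler_nat.
done.
Qed.

Theorem mainTheorem7 (n k : nat) (Hn : (1 < n)%N) (Hodd : odd n) (Hk : (0 < k)%N)
  (F : ctext n k -> ctext n k) :
  subst_success F <= 1 / ((pdiv n)%:R - 1 : rat).
Proof.
apply: ratlem; first by apply: prime_gt1; apply: pdiv_prime.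
have H := @card_bound n k Hn F. exact H.
Qed.
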